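(* Let $U_0, c_0, \rho_0 > 0$ and $\omega_f \in \mathbb{R}$ be constants and let $h$ be the Heaviside function. Let $f_1,\dots,f_4:\mathbb{R}\to\mathbb{R}$ be continuously differentiable, and $k_i,l_i,m_i$ ($i=1,\dots,4$) real numbers with $k_3k_4\neq 0$. Write $r_i = \sqrt{k_i^2+l_i^2+m_i^2}$, $\xi_i = k_ix+l_iy+m_iz$, and for $0\le\tau\le t$ set $a_1 = f_1[\xi_1 - (k_1U_0 - c_0r_1)(t-\tau)]$, $a_2 = f_2[\xi_2 - (k_2U_0+c_0r_2)(t-\tau)]$, $a_3 = f_3[\xi_3 - k_3U_0(t-\tau)]$, $a_4 = f_4[\xi_4 - k_4U_0(t-\tau)]$. Define $$v_x' = h(t)\int_0^t\Big(k_1 a_1 + k_2 a_2 + \tfrac{l_3}{k_3}a_3 + \tfrac{m_4}{k_4}a_4\Big)\sin\omega_f\tau\,d\tau,\quad v_y' = h(t)\int_0^t (l_1a_1 + l_2a_2 - a_3)\sin\omega_f\tau\,d\tau,$$ $$v_z' = h(t)\int_0^t (m_1a_1+m_2a_2-a_4)\sin\omega_f\tau\,d\tau,\quad p' = h(t)\int_0^t(-c_0\rho_0r_1a_1 + c_0\rho_0 r_2 a_2)\sin\omega_f\tau\,d\tau.$$ Then $(v_x',v_y',v_z',p')$ satisfies pointwise the system $$\partial_t v_x' + U_0\partial_x v_x' + \tfrac1{\rho_0}\partial_x p' = h(t)F\sin\omega_f t,\quad \partial_t v_y' + U_0\partial_x v_y' + \tfrac1{\rho_0}\partial_y p' = h(t)G\sin\omega_f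 t,$$ $$\partial_t v_z' + U_0\partial_x v_z' + \tfrac1{\rho_0}\partial_z p' = h(t)H\sin\omega_f t,\quad \partial_t p' + U_0\partial_x p' + \rho_0c_0^2(\partial_xv_x'+\partial_yv_y'+\partial_zv_z') = h(t)P\sin\omega_f t,$$ where $F = k_1f_1(\xi_1)+k_2f_2(\xi_2)+\frac{l_3}{k_3}f_3(\xi_3)+\frac{m_4}{k_4}f_4(\xi_4)$, $G = l_1f_1(\xi_1)+l_2f_2(\xi_2)-f_3(\xi_3)$, $H = m_1f_1(\xi_1)+m_2f_2(\xi_2)-f_4(\xi_4)$, $P = -c_0\rho_0r_1f_1(\xi_1)+c_0\rho_0r_2f_2(\xi_2)$.
   Context: This is the linearized 3D Euler system at a uniform flow $(U_0,0,0)$ forced by a permanent time-harmonic source with amplitude $(F,G,H,P)$ switched on at $t=0$. *)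

(* Defs.v *)
From Stdlib Require Import Reals.
From Coquelicot Require Import Coquelicot.
Open Scope R_scope.

Definition heaviside (t : R) : R := if Rle_dec 0 t then 1 else 0.

Definition cont_diff (f : R -> R) : Prop :=
  forall x, ex_derive f x /\ continuous (Derive f) x.


Definition r1 (U0 c0 rho0 wf : R) (f1 f2 f3 f4 : R -> R) (k1 l1 m1 k2 l2 m2 k3 l3 m3 k4 l4 m4 : R) := sqrt (k1^2 + l1^2 + m1^2).
Definition r2 (U0 c0 rho0 wf : R) (f1 f2 f3 f4 : R -> R) (k1 l1 m1 k2 l2 m2 k3 l3 m3 k4 l4 m4 : R) := sqrt (k2^2 + l2^2 + m2^2).

Definition xi1 (U0 c0 rho0 wf : R) (f1 f2 f3 f4 : R -> R) (k1 l1 m1 k2 l2 m2 k3 l3 m3 k4 l4 m4 : R) (x y z : R) := k1 * x + l1 * y + m1 * z.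
Definition xi2 (U0 c0 rho0 wf : R) (f1 f2 f3 f4 : R -> R) (k1 l1 m1 k2 l2 m2 k3 l3 m3 k4 l4 m4 : R) (x y z : R) := k2 * x + l2 * y + m2 * z.
Definition xi3 (U0 c0 rho0 wf : R) (f1 f2 f3 f4 : R -> R) (k1 l1 m1 k2 l2 m2 k3 l3 m3 k4 l4 m4 : R) (x y z : R) := k3 * x + l3 * y + m3 * z.
Definition xi4 (U0 c0 rho0 wf : R) (f1 f2 f3 f4 : R -> R) (k1 l1 m1 k2 l2 m2 k3 l3 m3 k4 l4 m4 : R) (x y z : R) := k4 * x + l4 * y + m4 * z.

Definition a1 (U0 c0 rho0 wf : R) (f1 f2 f3 f4 : R -> R) (k1 l1 m1 k2 l2 m2 k3 l3 m3 k4 l4 m4 : R) (t x y z tau : R) := f1 ((xi1 U0 c0 rho0 wf f1 f2 f3 f4 k1 l1 m1 k2 l2 m2 k3 l3 m3 k4 l4 m4) x y z - (k1 * U0 - c0 * (r1 U0 c0 rho0 wf f1 f2 f3 f4 k1 l1 m1 k2 l2 m2 k3 l3 m3 k4 l4 m4)) * (t - tau)).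
Definition a2 (U0 c0 rho0 wf : R) (f1 f2 f3 f4 : R -> R) (k1 l1 m1 k2 l2 m2 k3 l3 m3 k4 l4 m4 : R) (t x y z tau : R) := f2 ((xi2 U0 c0 rho0 wf f1 f2 f3 f4 k1 l1 m1 k2 l2 m2 k3 l3 m3 k4 l4 m4) x y z - (k2 * U0 + c0 * (r2 U0 c0 rho0 wf f1 f2 f3 f4 k1 l1 m1 k2 l2 m2 k3 l3 m3 k4 l4 m4)) * (t - tau)).
Definition a3 (U0 c0 rho0 wf : R) (f1 f2 f3 f4 : R -> R) (k1 l1 m1 k2 l2 m2 k3 l3 m3 k4 l4 m4 : R) (t x y z tau : R) := f3 ((xi3 U0 c0 rho0 wf f1 f2 f3 f4 k1 l1 m1 k2 l2 m2 k3 l3 m3 k4 l4 m4) x y z - k3 * U0 * (t - tau)).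
Definition a4 (U0 c0 rho0 wf : R) (f1 f2 f3 f4 : R -> R) (k1 l1 m1 k2 l2 m2 k3 l3 m3 k4 l4 m4 : R) (t x y z tau : R) := f4 ((xi4 U0 c0 rho0 wf f1 f2 f3 f4 k1 l1 m1 k2 l2 m2 k3 l3 m3 k4 l4 m4) x y z - k4 * U0 * (t - tau)).

Definition vx (U0 c0 rho0 wf : R) (f1 f2 f3 f4 : R -> R) (k1 l1 m1 k2 l2 m2 k3 l3 m3 k4 l4 m4 : R) (t x y z : R) : R :=
  heaviside t * RInt (fun tau =>
    (k1 * (a1 U0 c0 rho0 wf f1 f2 f3 f4 k1 l1 m1 k2 l2 m2 k3 l3 m3 k4 l4 m4) t x y z tau + k2 * (a2 U0 c0 rho0 wf f1 f2 f3 f4 k1 l1 m1 k2 l2 m2 k3 l3 m3 k4 l4 m4) t x y z tau + l3 / k3 * (a3 U0 c0 rho0 wf f1 f2 f3 f4 k1 l1 m1 k2 l2 m2 k3 l3 m3 k4 l4 m4) t x y z tau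
     + m4 / k4 * (a4 U0 c0 rho0 wf f1 f2 f3 f4 k1 l1 m1 k2 l2 m2 k3 l3 m3 k4 l4 m4) t x y z tau) * sin (wf * tau)) 0 t.
Definition vy (U0 c0 rho0 wf : R) (f1 f2 f3 f4 : R -> R) (k1 l1 m1 k2 l2 m2 k3 l3 m3 k4 l4 m4 : R) (t x y z : R) : R :=
  heaviside t * RInt (fun tau =>
    (l1 * (a1 U0 c0 rho0 wf f1 f2 f3 f4 k1 l1 m1 k2 l2 m2 k3 l3 m3 k4 l4 m4) t x y z tau + l2 * (a2 U0 c0 rho0 wf f1 f2 f3 f4 k1 l1 m1 k2 l2 m2 k3 l3 m3 k4 l4 m4) t x y z tau - (a3 U0 c0 rho0 wf f1 f2 f3 f4 k1 l1 m1 k2 l2 m2 k3 l3 m3 k4 l4 m4) t x y z tau) * sin (wf * tau)) 0 t.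
Definition vz (U0 c0 rho0 wf : R) (f1 f2 f3 f4 : R -> R) (k1 l1 m1 k2 l2 m2 k3 l3 m3 k4 l4 m4 : R) (t x y z : R) : R :=
  heaviside t * RInt (fun tau =>
    (m1 * (a1 U0 c0 rho0 wf f1 f2 f3 f4 k1 l1 m1 k2 l2 m2 k3 l3 m3 k4 l4 m4) t x y z tau + m2 * (a2 U0 c0 rho0 wf f1 f2 f3 f4 k1 l1 m1 k2 l2 m2 k3 l3 m3 k4 l4 m4) t x y z tau - (a4 U0 c0 rho0 wf f1 f2 f3 f4 k1 l1 m1 k2 l2 m2 k3 l3 m3 k4 l4 m4) t x y z tau) * sin (wf * tau)) 0 t.
Definition pp (U0 c0 rho0 wf : R) (f1 f2 f3 f4 : R -> R) (k1 l1 m1 k2 l2 m2 k3 l3 m3 k4 l4 m4 : R) (t x y z : R) : R :=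
  heaviside t * RInt (fun tau =>
    (- c0 * rho0 * (r1 U0 c0 rho0 wf f1 f2 f3 f4 k1 l1 m1 k2 l2 m2 k3 l3 m3 k4 l4 m4) * (a1 U0 c0 rho0 wf f1 f2 f3 f4 k1 l1 m1 k2 l2 m2 k3 l3 m3 k4 l4 m4) t x y z tau + c0 * rho0 * (r2 U0 c0 rho0 wf f1 f2 f3 f4 k1 l1 m1 k2 l2 m2 k3 l3 m3 k4 l4 m4) * (a2 U0 c0 rho0 wf f1 f2 f3 f4 k1 l1 m1 k2 l2 m2 k3 l3 m3 k4 l4 m4) t x y z tau)
    * sin (wf * tau)) 0 t.

Definition Fs (U0 c0 rho0 wf : R) (f1 f2 f3 f4 : R -> R) (k1 l1 m1 k2 l2 m2 k3 l3 m3 k4 l4 m4 : R) (x y z : R) := k1 * f1 ((xi1 U0 c0 rho0 wf f1 f2 f3 f4 k1 l1 m1 k2 l2 m2 k3 l3 m3 k4 l4 m4) x y z) + k2 * f2 ((xi2 U0 c0 rho0 wf f1 f2 f3 f4 k1 l1 m1 k2 l2 m2 k3 l3 m3 k4 l4 m4) x y z)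
  + l3 / k3 * f3 ((xi3 U0 c0 rho0 wf f1 f2 f3 f4 k1 l1 m1 k2 l2 m2 k3 l3 m3 k4 l4 m4) x y z) + m4 / k4 * f4 ((xi4 U0 c0 rho0 wf f1 f2 f3 f4 k1 l1 m1 k2 l2 m2 k3 l3 m3 k4 l4 m4) x y z).
Definition Gs (U0 c0 rho0 wf : R) (f1 f2 f3 f4 : R -> R) (k1 l1 m1 k2 l2 m2 k3 l3 m3 k4 l4 m4 : R) (x y z : R) := l1 * f1 ((xi1 U0 c0 rho0 wf f1 f2 f3 f4 k1 l1 m1 k2 l2 m2 k3 l3 m3 k4 l4 m4) x y z) + l2 * f2 ((xi2 U0 c0 rho0 wf f1 f2 f3 f4 k1 l1 m1 k2 l2 m2 k3 l3 m3 k4 l4 m4) x y z) - f3 ((xi3 U0 c0 rho0 wf f1 f2 f3 f4 k1 l1 m1 k2 l2 m2 k3 l3 m3 k4 l4 m4) x y z).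
Definition Hs (U0 c0 rho0 wf : R) (f1 f2 f3 f4 : R -> R) (k1 l1 m1 k2 l2 m2 k3 l3 m3 k4 l4 m4 : R) (x y z : R) := m1 * f1 ((xi1 U0 c0 rho0 wf f1 f2 f3 f4 k1 l1 m1 k2 l2 m2 k3 l3 m3 k4 l4 m4) x y z) + m2 * f2 ((xi2 U0 c0 rho0 wf f1 f2 f3 f4 k1 l1 m1 k2 l2 m2 k3 l3 m3 k4 l4 m4) x y z) - f4 ((xi4 U0 c0 rho0 wf f1 f2 f3 f4 k1 l1 m1 k2 l2 m2 k3 l3 m3 k4 l4 m4) x y z).
Definition Ps (U0 c0 rho0 wf : R) (f1 f2 f3 f4 : R -> R) (k1 l1 m1 k2 l2 m2 k3 l3 m3 k4 l4 m4 : R) (x y z : R) := - c0 * rho0 * (r1 U0 c0 rho0 wf f1 f2 f3 f4 k1 l1 m1 k2 l2 m2 k3 l3 m3 k4 l4 m4) * f1 ((xi1 U0 c0 rho0 wf f1 f2 f3 f4 k1 l1 m1 k2 l2 m2 k3 l3 m3 k4 l4 m4) x y z) + c0 * rho0 * (r2 U0 c0 rho0 wf f1 f2 f3 f4 k1 l1 m1 k2 l2 m2 k3 l3 m3 k4 l4 m4) * f2 ((xi2 U0 c0 rho0 wf f1 f2 f3 f4 k1 l1 m1 k2 l2 m2 k3 l3 m3 k4 l4 m4) x y z).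

Definition dt (g : R -> R -> R -> R -> R) t x y z := Derive (fun s => g s x y z) t.
Definition dx (g : R -> R -> R -> R -> R) t x y z := Derive (fun s => g t s y z) x.
Definition dy (g : R -> R -> R -> R -> R) t x y z := Derive (fun s => g t x s z) y.
Definition dz (g : R -> R -> R -> R -> R) t x y z := Derive (fun s => g t x y s) z.

Definition partials_exist (g : R -> R -> R -> R -> R) t x y z : Prop :=
  ex_derive (fun s => g s x y z) t /\ ex_derive (fun s => g t s y z) x /\
  ex_derive (fun s => g t x s z) y /\ ex_derive (fun s => g t x y s) z.

(* Main.v *)
Require Import Defs.
From Stdlib Require Import Reals Lra.
From Coquelicot Require Import Coquelicot.
Open Scope R_scope.

Lemma cont2d_affine (g : R -> R) a b c x y :
  continuous g (a*x+b*y+c) -> continuity_2d_pt (fun u v => g (a*u+b*v+c)) x y.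
Proof.
  intros Hg. apply continuity_2d_pt_filterlim.
  apply (continuous_comp (fun z : R * R => a * fst z + b * snd z + c) g (x, y)); [|exact Hg].
  apply (continuous_plus (fun z : R*R => a * fst z + b * snd z) (fun _ => c)).
  2: apply continuous_const.
  apply (continuous_plus (fun z : R*R => a * fst z) (fun z : R*R => b * snd z)).
  - apply (continuous_mult (fun _ : R*R => a) (fun z : R*R => fst z)).
    apply continuous_const. apply continuous_fst.
  - apply (continuous_mult (fun _ : R*R => b) (fun z : R*R => snd z)).
    apply continuous_const. apply continuous_snd.
Qed.

Lemma cont_aff (g : R -> R) a b z :
  (forall w, continuous g w) -> continuous (fun u => g (a*u+b)) z.
Proof.
  intros Hg. apply (continuous_comp (fun u => a*u+b) g z); [|apply Hg].
  apply (ex_derive_continuous (K:=R_AbsRing) (V:=R_NormedModule)). auto_derive. auto.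
Qed.
Definition Kc (f : R -> R) (s wf t xi : R) : R :=
  RInt (fun tau => f (xi - s*(t-tau)) * sin (wf*tau)) 0 t.

Lemma cd_cont f : cont_diff f -> forall w, continuous f w.
Proof. intros Hf w. apply (ex_derive_continuous (K:=R_AbsRing) (V:=R_NormedModule)). apply Hf. Qed.

Lemma cd_dcont f : cont_diff f -> forall w, continuous (Derive f) w.
Proof. intros Hf w. apply Hf. Qed.

Lemma integrand_cont (g : R -> R) s wf t xi z :
  (forall w, continuous g w) ->
  continuous (fun tau => g (xi - s*(t-tau)) * sin (wf*tau)) z.
Proof.
  intros Hg.
  apply (continuous_mult (fun tau => g (xi - s*(t-tau))) (fun tau => sin (wf*tau))).
  - apply (continuous_ext (fun u => g (s*u + (xi - s*t)))).
    + intros u; f_equal; ring.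
    + apply cont_aff; auto.
  - apply continuous_sin_comp.
    apply (ex_derive_continuous (K:=R_AbsRing) (V:=R_NormedModule)). auto_derive. auto.
Qed.

Lemma integrand_ex (g : R -> R) s wf t xi a b :
  (forall w, continuous g w) ->
  ex_RInt (fun tau => g (xi - s*(t-tau)) * sin (wf*tau)) a b.
Proof.
  intros Hg. apply (ex_RInt_continuous (V:=R_CompleteNormedModule)). intros z _. apply integrand_cont; auto.
Qed.

Lemma cont2d_integrand (g : R -> R) c s wf t xi u v :
  (forall w, continuous g w) ->
  continuity_2d_pt (fun u v => c * g (xi - s*(t-v)) * sin (wf*v)) u v.
Proof.
  intros Hg.
  apply continuity_2d_pt_mult.
  apply continuity_2d_pt_mult.
  apply continuity_2d_pt_const.
  - apply (continuity_2d_pt_ext (fun u v => g (0*u + s*v + (xi - s*t)))).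
    + intros; f_equal; ring.
    + apply cont2d_affine; auto.
  - apply (continuity_2d_pt_ext (fun u v => sin (0*u + wf*v + 0))).
    + intros; f_equal; ring.
    + apply cont2d_affine; apply continuous_sin.
Qed.

Lemma cont2d_integrand_u (g : R -> R) c s wf xi u v :
  (forall w, continuous g w) ->
  continuity_2d_pt (fun u v => c * g (xi - s*(u-v)) * sin (wf*v)) u v.
Proof.
  intros Hg.
  apply continuity_2d_pt_mult.
  apply continuity_2d_pt_mult.
  apply continuity_2d_pt_const.
  - apply (continuity_2d_pt_ext (fun u v => g ((-s)*u + s*v + xi))).
    + intros; f_equal; ring.
    + apply cont2d_affine; auto.
  - apply (continuity_2d_pt_ext (fun u v => sin (0*u + wf*v + 0))).
    + intros; f_equal; ring.
    + apply cont2d_affine; apply continuous_sin.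
Qed.

Lemma cont2d_integrand_xi (g : R -> R) c s wf t u v :
  (forall w, continuous g w) ->
  continuity_2d_pt (fun u v => c * g (u - s*(t-v)) * sin (wf*v)) u v.
Proof.
  intros Hg.
  apply continuity_2d_pt_mult.
  apply continuity_2d_pt_mult.
  apply continuity_2d_pt_const.
  - apply (continuity_2d_pt_ext (fun u v => g (1*u + s*v + (- s*t)))).
    + intros; f_equal; ring.
    + apply cont2d_affine; auto.
  - apply (continuity_2d_pt_ext (fun u v => sin (0*u + wf*v + 0))).
    + intros; f_equal; ring.
    + apply cont2d_affine; apply continuous_sin.
Qed.

Lemma Kc_dxi f s wf t xi : cont_diff f ->
  is_derive (fun xi => Kc f s wf t xi) xi (Kc (Derive f) s wf t xi).
Proof.
  intros Hf. unfold Kc.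
  assert (HD : forall u v, Derive (fun z => f (z - s*(t-v)) * sin (wf*v)) u
                         = 1 * Derive f (u - s*(t-v)) * sin (wf*v)).
  { intros u v. apply is_derive_unique. auto_derive; [apply (proj1 (Hf _)) | reflexivity]. }
  assert (E : RInt (fun tau => Derive f (xi - s*(t-tau)) * sin (wf*tau)) 0 t
     = RInt (fun tau => Derive (fun u => f (u - s*(t-tau)) * sin (wf*tau)) xi) 0 t).
  { apply RInt_ext. intros; rewrite HD, Rmult_1_l; reflexivity. }
  rewrite E.
  apply (is_derive_RInt_param (fun u tau => f (u - s*(t-tau)) * sin (wf*tau)) 0 t xi).
  - apply filter_forall. intros y tau _. auto_derive. apply (proj1 (Hf _)).
  - intros tau _. apply (continuity_2d_pt_ext (fun u v => 1 * Derive f (u - s*(t-v)) * sin (wf*v))).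
    + intros; rewrite HD; auto.
    + apply cont2d_integrand_xi. apply cd_dcont; auto.
  - apply filter_forall. intros y. apply integrand_ex. apply cd_cont; auto.
Qed.

Lemma RInt_scal_R (g : R -> R) a b l : ex_RInt g a b ->
  RInt (fun x => l * g x) a b = l * RInt g a b.
Proof. intros H. exact (RInt_scal (V:=R_CompleteNormedModule) g a b l H). Qed.

Lemma RInt_plus_R (g1 g2 : R -> R) a b : ex_RInt g1 a b -> ex_RInt g2 a b ->
  RInt (fun x => g1 x + g2 x) a b = RInt g1 a b + RInt g2 a b.
Proof. intros H1 H2. exact (RInt_plus (V:=R_CompleteNormedModule) g1 g2 a b H1 H2). Qed.

Lemma Kc_dt f s wf t xi : cont_diff f ->
  is_derive (fun t => Kc f s wf t xi) t (f xi * sin (wf*t) - s * Kc (Derive f) s wf t xi).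
Proof.
  intros Hf. unfold Kc.
  assert (HD : forall u v, Derive (fun z => f (xi - s*(z-v)) * sin (wf*v)) u
                         = (-s) * Derive f (xi - s*(u-v)) * sin (wf*v)).
  { intros u v. apply is_derive_unique. auto_derive; [apply (proj1 (Hf _)) |].
    change (fun x => f x) with f. unfold Rminus. ring. }
  set (F := fun u tau => f (xi - s*(u-tau)) * sin (wf*tau)).
  replace (f xi * sin (wf * t) - s * RInt (fun tau => Derive f (xi - s * (t - tau)) * sin (wf * tau)) 0 t)
    with (RInt (fun tau => Derive (fun u => F u tau) t) 0 t + F t t * 1).
  2:{ unfold F. rewrite Rminus_diag, Rmult_0_r, Rminus_0_r, Rmult_1_r.
      rewrite (RInt_ext _ (fun tau => (-s) * (Derive f (xi - s * (t - tau)) * sin (wf * tau)))).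
      2:{ intros x _; cbv beta; rewrite HD; now rewrite Rmult_assoc. }
      rewrite RInt_scal_R. ring.
      apply integrand_ex. apply cd_dcont; auto. }
  apply (is_derive_RInt_param_bound_comp_aux3 F 0 (fun u => u) t 1).
  - apply filter_forall. intros y. apply integrand_ex. apply cd_cont; auto.
  - exists (mkposreal 1 Rlt_0_1). apply filter_forall. intros y. apply integrand_ex. apply cd_cont; auto.
  - apply (is_derive_id (K:=R_AbsRing)).
  - exists (mkposreal 1 Rlt_0_1). apply filter_forall. intros y tau _. unfold F.
    auto_derive. apply (proj1 (Hf _)).
  - intros tau _. apply (continuity_2d_pt_ext (fun u v => (-s) * Derive f (xi - s*(u-v)) * sin (wf*v))).
    + intros; unfold F; rewrite HD; auto.
    + apply cont2d_integrand_u. apply cd_dcont; auto.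
  - apply locally_2d_forall. intros u v.
    apply (continuity_2d_pt_ext (fun u v => (-s) * Derive f (xi - s*(u-v)) * sin (wf*v))).
    + intros; unfold F; rewrite HD; auto.
    + apply cont2d_integrand_u. apply cd_dcont; auto.
  - apply continuity_pt_filterlim. unfold F. apply integrand_cont. apply cd_cont; auto.
Qed.

Definition Hc (f : R -> R) (s wf t xi : R) : R := heaviside t * Kc f s wf t xi.

Lemma heav_pos u : 0 <= u -> heaviside u = 1.
Proof. unfold heaviside; destruct (Rle_dec 0 u); lra. Qed.
Lemma heav_neg u : u < 0 -> heaviside u = 0.
Proof. unfold heaviside; destruct (Rle_dec 0 u); lra. Qed.

Lemma heav0 (g : R -> R) : is_derive g 0 0 -> g 0 = 0 ->
  is_derive (fun s => heaviside s * g s) 0 0.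
Proof.
  intros Hd H0. apply is_derive_Reals. apply is_derive_Reals in Hd.
  intros eps Heps. destruct (Hd eps Heps) as [del Hdel].
  exists del. intros h Hh Hh2.
  rewrite (heav_pos 0) by lra. rewrite H0, Rmult_0_r.
  destruct (Rle_dec 0 (0+h)) as [Hp|Hn].
  - rewrite heav_pos by lra. specialize (Hdel h Hh Hh2). rewrite H0 in Hdel.
    rewrite Rmult_1_l. exact Hdel.
  - rewrite heav_neg by lra. replace ((0 * g (0 + h) - 0) / h - 0) with 0 by (field; auto).
    rewrite Rabs_R0; lra.
Qed.

Lemma Kc_0 f s wf xi : Kc f s wf 0 xi = 0.
Proof. unfold Kc. apply (RInt_point (V:=R_CompleteNormedModule)). Qed.

Lemma Hc_dxi f s wf t xi : cont_diff f ->
  is_derive (fun xi => Hc f s wf t xi) xi (heaviside t * Kc (Derive f) s wf t xi).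
Proof. intros Hf. unfold Hc. apply is_derive_scal. apply Kc_dxi; auto. Qed.

Lemma Hc_dt f s wf t xi : cont_diff f ->
  is_derive (fun t => Hc f s wf t xi) t
    (heaviside t * (f xi * sin (wf*t) - s * Kc (Derive f) s wf t xi)).
Proof.
  intros Hf. unfold Hc.
  destruct (Rtotal_order t 0) as [Hn|[Hz|Hp]].
  - rewrite heav_neg by auto. rewrite Rmult_0_l.
    apply (is_derive_ext_loc (fun _ => 0)).
    + apply (filter_imp (fun u => u < 0)). intros u Hu. rewrite heav_neg by auto. now rewrite Rmult_0_l.
      apply (open_lt 0 t Hn).
    + apply (is_derive_const (K:=R_AbsRing) (V:=R_NormedModule)).
  - subst t. rewrite Kc_0, Rmult_0_r, sin_0. replace (heaviside 0 * (f xi * 0 - s * 0)) with 0 by ring.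
    apply heav0. 2: apply Kc_0.
    replace 0 with (f xi * sin (wf*0) - s * Kc (Derive f) s wf 0 xi) at 2.
    apply Kc_dt; auto. rewrite Kc_0, Rmult_0_r, sin_0. ring.
  - rewrite heav_pos by lra. rewrite Rmult_1_l.
    apply (is_derive_ext_loc (fun u => Kc f s wf u xi)).
    + apply (filter_imp (fun u => 0 < u)). intros u Hu. rewrite heav_pos by lra. now rewrite Rmult_1_l.
      apply (open_gt 0 t Hp).
    + apply Kc_dt; auto.
Qed.

Definition Tm (f : R -> R) (s k l m wf t x y z : R) : R := Hc f s wf t (k*x+l*y+m*z).
Definition Dm (f : R -> R) (s k l m wf t x y z : R) : R :=
  heaviside t * Kc (Derive f) s wf t (k*x+l*y+m*z).

Lemma Tm_dt f s k l m wf t x y z : cont_diff f ->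
  is_derive (fun u => Tm f s k l m wf u x y z) t
    (heaviside t * (f (k*x+l*y+m*z) * sin (wf*t)) - s * Dm f s k l m wf t x y z).
Proof.
  intros Hf. unfold Tm, Dm.
  replace (heaviside t * (f (k*x+l*y+m*z) * sin (wf*t)) - s * (heaviside t * Kc (Derive f) s wf t (k*x+l*y+m*z)))
    with (heaviside t * (f (k*x+l*y+m*z) * sin (wf*t) - s * Kc (Derive f) s wf t (k*x+l*y+m*z))) by ring.
  apply Hc_dt; auto.
Qed.

Lemma Tm_dx f s k l m wf t x y z : cont_diff f ->
  is_derive (fun u => Tm f s k l m wf t u y z) x (k * Dm f s k l m wf t x y z).
Proof.
  intros Hf. unfold Tm, Dm.
  assert (H2 : is_derive (fun u => k*u+l*y+m*z) x k) by (auto_derive; auto; ring).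
  exact (is_derive_comp (fun xi => Hc f s wf t xi) (fun u => k*u+l*y+m*z) x _ _ (Hc_dxi f s wf t _ Hf) H2).
Qed.

Lemma Tm_dy f s k l m wf t x y z : cont_diff f ->
  is_derive (fun u => Tm f s k l m wf t x u z) y (l * Dm f s k l m wf t x y z).
Proof.
  intros Hf. unfold Tm, Dm.
  assert (H2 : is_derive (fun u => k*x+l*u+m*z) y l) by (auto_derive; auto; ring).
  exact (is_derive_comp (fun xi => Hc f s wf t xi) (fun u => k*x+l*u+m*z) y _ _ (Hc_dxi f s wf t _ Hf) H2).
Qed.

Lemma Tm_dz f s k l m wf t x y z : cont_diff f ->
  is_derive (fun u => Tm f s k l m wf t x y u) z (m * Dm f s k l m wf t x y z).
Proof.
  intros Hf. unfold Tm, Dm.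
  assert (H2 : is_derive (fun u => k*x+l*y+m*u) z m) by (auto_derive; auto; ring).
  exact (is_derive_comp (fun xi => Hc f s wf t xi) (fun u => k*x+l*y+m*u) z _ _ (Hc_dxi f s wf t _ Hf) H2).
Qed.

Lemma sum4 (g1 g2 g3 g4 : R -> R) x c1 c2 c3 c4 d1 d2 d3 d4 :
  is_derive g1 x d1 -> is_derive g2 x d2 -> is_derive g3 x d3 -> is_derive g4 x d4 ->
  is_derive (fun s => c1*g1 s + c2*g2 s + c3*g3 s + c4*g4 s) x (c1*d1+c2*d2+c3*d3+c4*d4).
Proof.
  intros H1 H2 H3 H4.
  apply (is_derive_plus (V:=R_NormedModule)); [apply (is_derive_plus (V:=R_NormedModule)); [apply (is_derive_plus (V:=R_NormedModule))|]|];
  apply is_derive_scal; auto.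
Qed.

Lemma RInt_ext_R (g h : R -> R) a b : (forall x, g x = h x) -> RInt g a b = RInt h a b.
Proof. intros H. apply RInt_ext. intros; apply H. Qed.

Lemma rep4 (f1 f2 f3 f4 : R -> R) s1 s2 s3 s4 k1 l1 m1 k2 l2 m2 k3 l3 m3 k4 l4 m4 c1 c2 c3 c4 wf t x y z :
  cont_diff f1 -> cont_diff f2 -> cont_diff f3 -> cont_diff f4 ->
  heaviside t * RInt (fun tau =>
     (c1 * f1 (k1*x+l1*y+m1*z - s1*(t-tau)) + c2 * f2 (k2*x+l2*y+m2*z - s2*(t-tau))
      + c3 * f3 (k3*x+l3*y+m3*z - s3*(t-tau)) + c4 * f4 (k4*x+l4*y+m4*z - s4*(t-tau))) * sin (wf*tau)) 0 t
  = c1 * Tm f1 s1 k1 l1 m1 wf t x y z + c2 * Tm f2 s2 k2 l2 m2 wf t x y z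
    + c3 * Tm f3 s3 k3 l3 m3 wf t x y z + c4 * Tm f4 s4 k4 l4 m4 wf t x y z.
Proof.
  intros H1 H2 H3 H4. unfold Tm, Hc, Kc.
  set (g1 := fun tau => f1 (k1*x+l1*y+m1*z - s1*(t-tau)) * sin (wf*tau)).
  set (g2 := fun tau => f2 (k2*x+l2*y+m2*z - s2*(t-tau)) * sin (wf*tau)).
  set (g3 := fun tau => f3 (k3*x+l3*y+m3*z - s3*(t-tau)) * sin (wf*tau)).
  set (g4 := fun tau => f4 (k4*x+l4*y+m4*z - s4*(t-tau)) * sin (wf*tau)).
  assert (E1 : ex_RInt g1 0 t) by (apply integrand_ex; apply cd_cont; auto).
  assert (E2 : ex_RInt g2 0 t) by (apply integrand_ex; apply cd_cont; auto).
  assert (E3 : ex_RInt g3 0 t) by (apply integrand_ex; apply cd_cont; auto).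
  assert (E4 : ex_RInt g4 0 t) by (apply integrand_ex; apply cd_cont; auto).
  rewrite (RInt_ext_R _ (fun tau => ((c1 * g1 tau + c2 * g2 tau) + c3 * g3 tau) + c4 * g4 tau)).
  2:{ intros tau. unfold g1, g2, g3, g4. ring. }
  assert (S1 : ex_RInt (fun tau => c1 * g1 tau) 0 t) by (apply (ex_RInt_scal (V:=R_NormedModule)); auto).
  assert (S2 : ex_RInt (fun tau => c2 * g2 tau) 0 t) by (apply (ex_RInt_scal (V:=R_NormedModule)); auto).
  assert (S3 : ex_RInt (fun tau => c3 * g3 tau) 0 t) by (apply (ex_RInt_scal (V:=R_NormedModule)); auto).
  assert (S4 : ex_RInt (fun tau => c4 * g4 tau) 0 t) by (apply (ex_RInt_scal (V:=R_NormedModule)); auto).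
  assert (S12 : ex_RInt (fun tau => c1 * g1 tau + c2 * g2 tau) 0 t) by (apply (ex_RInt_plus (V:=R_NormedModule)); auto).
  assert (S123 : ex_RInt (fun tau => c1 * g1 tau + c2 * g2 tau + c3 * g3 tau) 0 t) by (apply (ex_RInt_plus (V:=R_NormedModule)); auto).
  rewrite RInt_plus_R by auto. rewrite RInt_plus_R by auto. rewrite RInt_plus_R by auto.
  rewrite !RInt_scal_R by auto. fold g1 g2 g3 g4. ring.
Qed.

Ltac dd R L := eapply is_derive_ext; [intros ?u; cbv beta; symmetry; apply R | apply sum4; apply L; auto].

Theorem proposition7
  (U0 c0 rho0 wf : R) (f1 f2 f3 f4 : R -> R)
  (k1 l1 m1 k2 l2 m2 k3 l3 m3 k4 l4 m4 : R) :
  0 < U0 -> 0 < c0 -> 0 < rho0 ->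
  cont_diff f1 -> cont_diff f2 -> cont_diff f3 -> cont_diff f4 ->
  k3 * k4 <> 0 ->
  let VX := vx U0 c0 rho0 wf f1 f2 f3 f4 k1 l1 m1 k2 l2 m2 k3 l3 m3 k4 l4 m4 in
  let VY := vy U0 c0 rho0 wf f1 f2 f3 f4 k1 l1 m1 k2 l2 m2 k3 l3 m3 k4 l4 m4 in
  let VZ := vz U0 c0 rho0 wf f1 f2 f3 f4 k1 l1 m1 k2 l2 m2 k3 l3 m3 k4 l4 m4 in
  let P' := pp U0 c0 rho0 wf f1 f2 f3 f4 k1 l1 m1 k2 l2 m2 k3 l3 m3 k4 l4 m4 in
  let F := Fs U0 c0 rho0 wf f1 f2 f3 f4 k1 l1 m1 k2 l2 m2 k3 l3 m3 k4 l4 m4 in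
  let G := Gs U0 c0 rho0 wf f1 f2 f3 f4 k1 l1 m1 k2 l2 m2 k3 l3 m3 k4 l4 m4 in
  let H := Hs U0 c0 rho0 wf f1 f2 f3 f4 k1 l1 m1 k2 l2 m2 k3 l3 m3 k4 l4 m4 in
  let P := Ps U0 c0 rho0 wf f1 f2 f3 f4 k1 l1 m1 k2 l2 m2 k3 l3 m3 k4 l4 m4 in
  forall t x y z : R,
    partials_exist VX t x y z /\ partials_exist VY t x y z /\
    partials_exist VZ t x y z /\ partials_exist P' t x y z /\
    dt VX t x y z + U0 * dx VX t x y z + / rho0 * dx P' t x y z
      = heaviside t * F x y z * sin (wf * t) /\
    dt VY t x y z + U0 * dx VY t x y z + / rho0 * dy P' t x y z
      = heaviside t * G x y z * sin (wf * t) /\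
    dt VZ t x y z + U0 * dx VZ t x y z + / rho0 * dz P' t x y z
      = heaviside t * H x y z * sin (wf * t) /\
    dt P' t x y z + U0 * dx P' t x y z
      + rho0 * c0 ^ 2 * (dx VX t x y z + dy VY t x y z + dz VZ t x y z)
      = heaviside t * P x y z * sin (wf * t).
Proof.
  intros HU Hc0 Hrho Hf1 Hf2 Hf3 Hf4 Hk VX VY VZ P' F G H P t x y z.
  assert (Hk3 : k3 <> 0) by (intro E; apply Hk; rewrite E; ring).
  assert (Hk4 : k4 <> 0) by (intro E; apply Hk; rewrite E; ring).
  assert (Hr0 : rho0 <> 0) by lra.
  set (r1v := r1 U0 c0 rho0 wf f1 f2 f3 f4 k1 l1 m1 k2 l2 m2 k3 l3 m3 k4 l4 m4).
  set (r2v := r2 U0 c0 rho0 wf f1 f2 f3 f4 k1 l1 m1 k2 l2 m2 k3 l3 m3 k4 l4 m4).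
  assert (Hr1 : r1v * r1v = k1^2+l1^2+m1^2).
  { unfold r1v, r1. apply sqrt_sqrt. nra. }
  assert (Hr2 : r2v * r2v = k2^2+l2^2+m2^2).
  { unfold r2v, r2. apply sqrt_sqrt. nra. }
  set (s1 := k1*U0 - c0*r1v). set (s2 := k2*U0 + c0*r2v).
  assert (RVX : forall t x y z, VX t x y z =
    k1 * Tm f1 s1 k1 l1 m1 wf t x y z + k2 * Tm f2 s2 k2 l2 m2 wf t x y z
    + l3/k3 * Tm f3 (k3*U0) k3 l3 m3 wf t x y z + m4/k4 * Tm f4 (k4*U0) k4 l4 m4 wf t x y z).
  { intros. unfold VX, vx, a1, a2, a3, a4, xi1, xi2, xi3, xi4.
    etransitivity; [|apply rep4; auto]. apply Rmult_eq_compat_l. apply RInt_ext_R. intros; unfold s1, s2, r1v, r2v; ring. }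
  assert (RVY : forall t x y z, VY t x y z =
    l1 * Tm f1 s1 k1 l1 m1 wf t x y z + l2 * Tm f2 s2 k2 l2 m2 wf t x y z
    + (-1) * Tm f3 (k3*U0) k3 l3 m3 wf t x y z + 0 * Tm f4 (k4*U0) k4 l4 m4 wf t x y z).
  { intros. unfold VY, vy, a1, a2, a3, a4, xi1, xi2, xi3, xi4.
    etransitivity; [|apply rep4; auto]. apply Rmult_eq_compat_l. apply RInt_ext_R. intros; unfold s1, s2, r1v, r2v; ring. }
  assert (RVZ : forall t x y z, VZ t x y z =
    m1 * Tm f1 s1 k1 l1 m1 wf t x y z + m2 * Tm f2 s2 k2 l2 m2 wf t x y z
    + 0 * Tm f3 (k3*U0) k3 l3 m3 wf t x y z + (-1) * Tm f4 (k4*U0) k4 l4 m4 wf t x y z).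
  { intros. unfold VZ, vz, a1, a2, a3, a4, xi1, xi2, xi3, xi4.
    etransitivity; [|apply rep4; auto]. apply Rmult_eq_compat_l. apply RInt_ext_R. intros; unfold s1, s2, r1v, r2v; ring. }
  assert (RP : forall t x y z, P' t x y z =
    (- c0 * rho0 * r1v) * Tm f1 s1 k1 l1 m1 wf t x y z + (c0 * rho0 * r2v) * Tm f2 s2 k2 l2 m2 wf t x y z
    + 0 * Tm f3 (k3*U0) k3 l3 m3 wf t x y z + 0 * Tm f4 (k4*U0) k4 l4 m4 wf t x y z).
  { intros. unfold P', pp, a1, a2, a3, a4, xi1, xi2, xi3, xi4.
    etransitivity; [|apply rep4; auto]. apply Rmult_eq_compat_l. apply RInt_ext_R. intros; unfold s1, s2, r1v, r2v; ring. }
  eassert (dVXt : is_derive (fun s : R => VX s x y z) t _) by dd RVX Tm_dt.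
  eassert (dVXx : is_derive (fun s : R => VX t s y z) x _) by dd RVX Tm_dx.
  eassert (dVXy : is_derive (fun s : R => VX t x s z) y _) by dd RVX Tm_dy.
  eassert (dVXz : is_derive (fun s : R => VX t x y s) z _) by dd RVX Tm_dz.
  eassert (dVYt : is_derive (fun s : R => VY s x y z) t _) by dd RVY Tm_dt.
  eassert (dVYx : is_derive (fun s : R => VY t s y z) x _) by dd RVY Tm_dx.
  eassert (dVYy : is_derive (fun s : R => VY t x s z) y _) by dd RVY Tm_dy.
  eassert (dVYz : is_derive (fun s : R => VY t x y s) z _) by dd RVY Tm_dz.
  eassert (dVZt : is_derive (fun s : R => VZ s x y z) t _) by dd RVZ Tm_dt.
  eassert (dVZx : is_derive (fun s : R => VZ t s y z) x _) by dd RVZ Tm_dx.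
  eassert (dVZy : is_derive (fun s : R => VZ t x s z) y _) by dd RVZ Tm_dy.
  eassert (dVZz : is_derive (fun s : R => VZ t x y s) z _) by dd RVZ Tm_dz.
  eassert (dPt : is_derive (fun s : R => P' s x y z) t _) by dd RP Tm_dt.
  eassert (dPx : is_derive (fun s : R => P' t s y z) x _) by dd RP Tm_dx.
  eassert (dPy : is_derive (fun s : R => P' t x s z) y _) by dd RP Tm_dy.
  eassert (dPz : is_derive (fun s : R => P' t x y s) z _) by dd RP Tm_dz.
  unfold partials_exist, dt, dx, dy, dz.
  rewrite (is_derive_unique _ _ _ dVXt), (is_derive_unique _ _ _ dVXx),
          (is_derive_unique _ _ _ dVYt), (is_derive_unique _ _ _ dVYx), (is_derive_unique _ _ _ dVYy),
          (is_derive_unique _ _ _ dVZt), (is_derive_unique _ _ _ dVZx), (is_derive_unique _ _ _ dVZz),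
          (is_derive_unique _ _ _ dPt), (is_derive_unique _ _ _ dPx), (is_derive_unique _ _ _ dPy),
          (is_derive_unique _ _ _ dPz).
  unfold F, G, H, P, Fs, Gs, Hs, Ps, xi1, xi2, xi3, xi4. fold r1v r2v.
  unfold s1, s2.
  split; [repeat split; eexists; eauto|].
  split; [repeat split; eexists; eauto|].
  split; [repeat split; eexists; eauto|].
  split; [repeat split; eexists; eauto|].
  split; [field; auto|].
  split; [field; auto|].
  split; [field; auto|].
  apply Rminus_diag_uniq.
  transitivity (- c0^2*rho0*((r1v*r1v - (k1^2+l1^2+m1^2)) * Dm f1 (k1*U0 - c0*r1v) k1 l1 m1 wf t x y z
                 + (r2v*r2v - (k2^2+l2^2+m2^2)) * Dm f2 (k2*U0 + c0*r2v) k2 l2 m2 wf t x y z)).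
  - field; auto.
  - rewrite Hr1, Hr2; ring.
Qed.
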